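(* For $q\ge 1$, the bivariate generating function $W_q(x,y)=\sum_{n,k\ge0}w_{n,k}x^ny^k$, where $w_{n,k}$ is the number of $q$-decreasing binary words of length $n$ containing exactly $k$ letters $1$, is $$W_q(x,y)=\frac{1-x^{q+1}y^q}{1-xy-x+x^{q+2}y^{q+1}}.$$
   Context: For $q\ge1$, a binary word is $q$-decreasing if for every maximal run of $0$s, of length $a>0$, together with the (possibly empty) maximal run of $1$s immediately following it, of length $b$, one has $q\cdot a>b$. The empty word counts as the unique word of length $0$. *)

(* Defs.v *)
From mathcomp Require Import all_boot all_order all_algebra.
Set Implicit Arguments. Unset Strict Implicit. Unset Printing Implicit Defensive.
Import GRing.Theory Num.Theory.

(* Binary words are [seq bool]: [false] is the letter 0, [true] the letter 1. *)

(* w is q-decreasing iff for every decomposition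
     w = u ++ 0^a ++ 1^b ++ v
   in which 0^a (a > 0) is a maximal run of 0s (u is empty or ends with 1)
   and 1^b is the (possibly empty) maximal run of 1s immediately following it
   (v is empty, or b > 0 and v starts with 0), we have q * a > b.
   The prefix u is [take i w] and v is [drop (i+a+b) w]; the bounds
   i, a, b <= size w are automatic for any such decomposition. *)
Definition q_decreasing (q : nat) (w : seq bool) : bool :=
  [forall i : 'I_(size w).+1, forall a : 'I_(size w).+1, forall b : 'I_(size w).+1,
     let u := take i w in
     let v := drop (i + a + b) w in
     [&& w == u ++ nseq a false ++ nseq b true ++ v,
         0 < a,
         last true u &
         (v == [::]) || ((0 < b) && ~~ head true v)]
     ==> (b < q * a)].

Definition w_count (q n k : nat) : nat :=
  #|[set t : n.-tuple bool | q_decreasing q t && (count id t == k)]|.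

(* Formal bivariate power series in x, y with integer coefficients:
   s n k is the coefficient of x^n y^k. *)
Definition series := nat -> nat -> int.

Definition smul (f g : series) : series :=
  fun n k => (\sum_(i < n.+1) \sum_(j < k.+1) f i j * g (n - i)%N (k - j)%N)%R.

Definition smono (c : int) (a b : nat) : series :=
  fun n k => if (n == a) && (k == b) then c else 0%R.

Definition sadd (f g : series) : series := fun n k => (f n k + g n k)%R.

Definition W (q : nat) : series := fun n k => Posz (w_count q n k).

Definition Wnum (q : nat) : series :=
  sadd (smono 1%R 0 0) (smono (-1)%R q.+1 q).

Definition Wden (q : nat) : series :=
  sadd (sadd (smono 1%R 0 0) (smono (-1)%R 1 1))
       (sadd (smono (-1)%R 1 0) (smono 1%R q.+2 q.+1)).

(* Main.v *)
Require Import Defs.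
From mathcomp Require Import all_boot all_order all_algebra zify.
Set Implicit Arguments. Unset Strict Implicit. Unset Printing Implicit Defensive.

Definition QD q (z : seq bool) := forall u a b v,
  z = u ++ nseq a false ++ nseq b true ++ v -> 0 < a -> last true u ->
  (v = [::] \/ (0 < b /\ ~~ head true v)) -> b < q * a.

Lemma qdP q z : q_decreasing q z <-> QD q z.
Proof.
split.
- move=> /forallP H u a b v Ez a0 lu hv.
  have Hs : size z = size u + a + b + size v by rewrite Ez !size_cat !size_nseq; lia.
  have Hi : size u < (size z).+1 by lia.
  have Ha : a < (size z).+1 by lia.
  have Hb : b < (size z).+1 by lia.
  move: (H (Ordinal Hi)) => /forallP /(_ (Ordinal Ha)) /forallP /(_ (Ordinal Hb)) /implyP /=.
  apply.
  have Et : take (size u) z = u by rewrite Ez take_size_cat.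
  have Ed : drop (size u + a + b) z = v.
    by rewrite Ez !catA drop_size_cat // !size_cat !size_nseq; lia.
  rewrite Et Ed -Ez eqxx a0 lu /=.
  by case: hv => [->|[-> ->]] //; rewrite orbT.
- move=> H; apply/forallP => i; apply/forallP => a; apply/forallP => b; apply/implyP => /=.
  move=> /and4P [/eqP Ez a0 lu hv]; apply: (H _ _ _ _ Ez a0 lu).
  by case/orP: hv => [/eqP ->|/andP [-> ->]]; [left|right].
Qed.


Lemma nseqSr n (x : bool) : nseq n.+1 x = rcons (nseq n x) x.
Proof. by elim: n => //= n ->. Qed.

Lemma rcons_dec z x u a b v : rcons z x = u ++ nseq a false ++ nseq b true ++ v -> 0 < a ->
 (v = [::] /\ ((b = 0 /\ x = false /\ z = u ++ nseq a.-1 false) \/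
               (0 < b /\ x = true /\ z = u ++ nseq a false ++ nseq b.-1 true)))
 \/ (exists v', v = rcons v' x /\ z = u ++ nseq a false ++ nseq b true ++ v').
Proof.
case/lastP: v => [|v' y].
- case: b => [|b]; case: a => [|a]; rewrite ?cats0 //.
  + by rewrite nseqSr -rcons_cat => /rcons_inj [-> ->] _; left; split => //; left.
  + by rewrite (nseqSr b) -!rcons_cat => /rcons_inj [-> ->] _; left; split => //; right.
- by rewrite -!rcons_cat => /rcons_inj [-> ->] _; right; exists v'; rewrite !catA.
Qed.

Lemma qd_rcons0 q z : 0 < q -> q_decreasing q (rcons z false) = q_decreasing q z.
Proof.
move=> q0; apply/idP/idP => /qdP H; apply/qdP.
- move=> u a b v Ez a0 lu hv.
  case: b Ez hv => [|b] Ez hv; first by rewrite muln_gt0 q0.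
  case: hv => [Ev|[b0 hv]].
  + apply: (H u a b.+1 [:: false]) => //; last by right.
    by rewrite Ez Ev cats0 -cats1 -!catA.
  + apply: (H u a b.+1 (rcons v false)) => //.
    * by rewrite Ez -!rcons_cat.
    * by right; split => //; case: v {Ez} hv.
- move=> u a b v Ez a0 lu hv.
  case: (rcons_dec Ez a0) => [[Ev [[-> _]|[_ [//]]]]|[v' [Ev Ez']]].
  + by rewrite muln_gt0 q0.
  + apply: (H u a b v' Ez' a0 lu).
    subst v; case: hv => [|[b0 hv]]; first by move=> /(congr1 size); rewrite size_rcons.
    by case: v' {Ez Ez'} hv => [|y v'] hv; [left | right].
Qed.


Lemma runs (x : bool) n n' s s' : last (~~x) s = ~~x -> last (~~x) s' = ~~x ->
  s ++ nseq n x = s' ++ nseq n' x -> s = s' /\ n = n'.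
Proof.
elim: n n' => [|n IH] [|n'] ls ls'; rewrite ?cats0.
- by [].
- move=> E; move: ls; rewrite E nseqSr -rcons_cat last_rcons.
  by case: (x).
- move=> E; move: ls'; rewrite -E nseqSr -rcons_cat last_rcons.
  by case: (x).
- by rewrite !nseqSr -!rcons_cat => /rcons_inj [/IH] [] // -> ->.
Qed.

Lemma dec_uniq u a b u' a' b' : last true u -> last true u' -> 0 < a -> 0 < a' ->
  u ++ nseq a false ++ nseq b true = u' ++ nseq a' false ++ nseq b' true ->
  [/\ u = u', a = a' & b = b'].
Proof.
move=> lu lu' a0 a0'; rewrite !catA => /runs [].
- by rewrite last_cat; case: a a0 => // a _; rewrite nseqSr last_rcons.
- by rewrite last_cat; case: a' a0' => // a' _; rewrite nseqSr last_rcons.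
move=> /runs [] /=; [by rewrite lu | by rewrite lu' | by move=> -> -> -> ].
Qed.

Definition sfx q a := nseq a false ++ nseq (q * a).-1 true.

Definition Bk q a (z : seq bool) :=
  [&& 0 < a, size (sfx q a) <= size z,
      drop (size z - size (sfx q a)) z == sfx q a &
      last true (take (size z - size (sfx q a)) z)].

Lemma BkP q a z : reflect (exists u, z = u ++ sfx q a /\ 0 < a /\ last true u) (Bk q a z).
Proof.
apply: (iffP idP).
- move=> /and4P [a0 hs /eqP hd hl]; exists (take (size z - size (sfx q a)) z).
  by split; [rewrite -[X in _ ++ X]hd cat_take_drop | split].
- move=> [u [-> [a0 lu]]]; rewrite /Bk a0 size_cat leq_addl addnK.
  by rewrite take_size_cat // drop_size_cat // eqxx lu.
Qed.

Definition bad q (z : seq bool) := has (fun a => Bk q a z) (iota 0 (size z).+1).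

Lemma badP q z : reflect (exists u a, z = u ++ sfx q a /\ 0 < a /\ last true u) (bad q z).
Proof.
apply: (iffP hasP).
- by move=> [a _ /BkP [u [E [a0 lu]]]]; exists u, a.
- move=> [u [a [E [a0 lu]]]]; exists a; last by apply/BkP; exists u.
  rewrite mem_iota add0n ltnS E size_cat /sfx size_cat size_nseq; lia.
Qed.

Lemma qd_rcons1 q z : 0 < q ->
  q_decreasing q (rcons z true) = q_decreasing q z && ~~ bad q z.
Proof.
move=> q0; apply/idP/andP.
- move/qdP => H; split.
  + apply/qdP => u a b v Ez a0 lu hv.
    case: hv => [Ev|[b0 hv]].
    * have: b.+1 < q * a.
        apply: (H u a b.+1 [::]) => //; last by left.
        by rewrite Ez Ev !cats0 nseqSr -!rcons_cat.
      lia.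
    * apply: (H u a b (rcons v true)) => //.
      - by rewrite Ez -!rcons_cat.
      - by right; split => //; case: v {Ez} hv.
  + apply/badP => [[u [a [Ez [a0 lu]]]]].
    have: (q * a).-1.+1 < q * a.
      apply: (H u a _ [::]) => //; last by left.
        by rewrite Ez /sfx !cats0 nseqSr !rcons_cat.
    lia.
- move=> [/qdP H /badP Hb]; apply/qdP.
  move=> u a b v Ez a0 lu hv.
  case: (rcons_dec Ez a0) => [[Ev [[_ [//]]|[b0 [_ Ez']]]]|[v' [Ev Ez']]].
  + have := H u a b.-1 [::]; rewrite cats0 => /(_ Ez' a0 lu (or_introl erefl)) h.
    have hne : b.-1 != (q * a).-1.
      apply/negP => /eqP hb; apply: Hb; exists u, a; split => //.
      by rewrite Ez' /sfx hb.
    have : 0 < q * a by rewrite muln_gt0 q0.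
    lia.
  + apply: (H u a b v' Ez' a0 lu).
    subst v; case: hv => [|[b0 hv]]; first by move=> /(congr1 size); rewrite size_rcons.
    by case: v' {Ez Ez'} hv => [|y v'] hv; [left | right].
Qed.


Lemma qd_nil q : q_decreasing q [::].
Proof.
apply/qdP => u a b v /(congr1 size); rewrite !size_cat size_nseq /=; lia.
Qed.

Lemma qd_zeros q u a : 0 < q -> q_decreasing q (u ++ nseq a false) = q_decreasing q u.
Proof.
move=> q0; elim: a => [|a IH]; first by rewrite cats0.
by rewrite nseqSr -rcons_cat qd_rcons0.
Qed.

Lemma bad_block q u a b : last true u -> 0 < a ->
  bad q (u ++ nseq a false ++ nseq b true) = (b == (q * a).-1).
Proof.
move=> lu a0; apply/badP/eqP.
- move=> [u' [a' [E [a0' lu']]]].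
  by have [_ -> ->] := dec_uniq lu lu' a0 a0' E.
- by move=> ->; exists u, a.
Qed.

Lemma qd_block q u a b : 0 < q -> last true u -> 0 < a ->
  q_decreasing q (u ++ nseq a false ++ nseq b true) = q_decreasing q u && (b < q * a).
Proof.
move=> q0 lu a0; elim: b => [|b IH].
  by rewrite cats0 qd_zeros // muln_gt0 q0 a0 !andbT.
rewrite (nseqSr b) -!rcons_cat qd_rcons1 // IH bad_block //.
have : 0 < q * a by rewrite muln_gt0 q0.
case: (q_decreasing q u) => //= h.
apply/idP/idP; [move/andP => [h1 /eqP h2] | move=> h1; apply/andP; split; [|apply/eqP]]; lia.
Qed.

Lemma Bk_size q a z : Bk q a z -> a <= size z.
Proof.
move=> /and4P [_ h _ _]; move: h; rewrite /sfx size_cat size_nseq; lia.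
Qed.

Lemma Bk_uniq q a a' z : Bk q a z -> Bk q a' z -> a = a'.
Proof.
move=> /BkP [u [E [a0 lu]]] /BkP [u' [E' [a0' lu']]].
by move: E'; rewrite E /sfx => /(dec_uniq lu lu' a0 a0') [].
Qed.

Lemma count_Bk q z M : size z < M -> count (fun a => Bk q a z) (iota 0 M) = bad q z.
Proof.
move=> hM; case hb: (bad q z).
- move: (hb) => /hasP [a _ ha].
  rewrite (@eq_count _ _ (pred1 a)); last first.
    by move=> a' /=; apply/idP/eqP => [h|->//]; apply: Bk_uniq h ha.
  rewrite count_uniq_mem ?iota_uniq // mem_iota add0n.
  by have := Bk_size ha; lia.
- apply/eqP; rewrite -leqn0 leqNgt -has_count; apply/hasPn => a _.
  apply/negP => ha; move/negbT: hb => /negP; apply; apply/hasP; exists a => //.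
  by rewrite mem_iota add0n ltnS; apply: Bk_size ha.
Qed.


Fixpoint words n : seq (seq bool) :=
  if n is n'.+1 then map (rcons^~ false) (words n') ++ map (rcons^~ true) (words n')
  else [:: [::]].

Lemma mem_words n z : (z \in words n) = (size z == n).
Proof.
elim: n z => [|n IH] z; first by rewrite inE size_eq0.
case/lastP: z => [|z c] /=.
  by rewrite mem_cat; apply/negbTE; apply/orP => [[]] /mapP [y _] /(congr1 size); rewrite size_rcons.
rewrite mem_cat size_rcons eqSS -IH.
apply/orP/idP => [[]|h].
- by move/mapP => [y hy /rcons_inj [-> _]].
- by move/mapP => [y hy /rcons_inj [-> _]].
- by case: c; [right | left]; apply/mapP; exists z.
Qed.

Lemma words_uniq n : uniq (words n).
Proof.
elim: n => //= n IH; rewrite cat_uniq !(map_inj_uniq (@rcons_injl _ _)) IH /=.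
rewrite andbT; apply/hasPn => z /mapP [y _ ->]; apply/mapP => [[y' _ /rcons_inj []]] //.
Qed.

Lemma count_as_sum (T : Type) (P : pred T) s : count P s = \sum_(z <- s) (P z : nat).
Proof. by elim: s => [|x s IH]; rewrite ?big_nil ?big_cons //= IH. Qed.

Lemma count_split (T : Type) (P Q : pred T) s :
  count (fun z => P z && Q z) s + count (fun z => P z && ~~ Q z) s = count P s.
Proof.
elim: s => //= x s <-; case: (P x); case: (Q x) => /=; lia.
Qed.

Lemma cnt_rcons (z : seq bool) b : count id (rcons z b) = count id z + b.
Proof. by rewrite -cats1 count_cat /= addn0. Qed.

Lemma count_img (f : seq bool -> seq bool) (P : pred (seq bool)) n m :
  injective f -> (forall u, size u = n -> size (f u) = m) ->
  count (fun z => z \in map f (filter P (words n))) (words m) = count P (words n).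
Proof.
move=> injf hs; set S := map f (filter P (words n)).
rewrite -size_filter; transitivity (size S); last by rewrite size_map size_filter.
apply: perm_size; apply: uniq_perm.
- by apply: filter_uniq; apply: words_uniq.
- by rewrite /S (map_inj_uniq injf) filter_uniq // words_uniq.
move=> z; rewrite mem_filter; apply/andP/idP => [[]//|h]; split => //.
move: h => /mapP [u]; rewrite mem_filter => /andP [_]; rewrite mem_words => /eqP hu ->.
by rewrite mem_words hs.
Qed.

Lemma cat_injl (s : seq bool) : injective (fun u : seq bool => u ++ s).
Proof.
move=> u1 u2 /= E.
have hs : size u1 = size u2 by move: (congr1 size E); rewrite !size_cat; lia.
by rewrite -(take_size_cat s (erefl (size u1))) E take_size_cat.
Qed.


Lemma cnt1 (z : seq bool) : count id (rcons z true) = (count id z).+1.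
Proof. by rewrite cnt_rcons addn1. Qed.
Lemma cnt0 (z : seq bool) : count id (rcons z false) = count id z.
Proof. by rewrite cnt_rcons addn0. Qed.

Definition V q n k := count (fun z => q_decreasing q z && (count id z == k)) (words n).
Definition Bc q n k := count (fun z => q_decreasing q z && bad q z && (count id z == k)) (words n).
Definition Ec q n k := count (fun z => q_decreasing q z && last true z && (count id z == k)) (words n).
Definition F q a n k := count (fun z => q_decreasing q z && Bk q a z && (count id z == k)) (words n).

Lemma count_wordsS (P : pred (seq bool)) n : count P (words n.+1) =
  count (fun z => P (rcons z false)) (words n) + count (fun z => P (rcons z true)) (words n).
Proof. by rewrite /= count_cat !count_map. Qed.

Lemma count0 (P : pred (seq bool)) s : (forall z, P z = false) -> count P s = 0.
Proof. by move=> h; rewrite (eq_count h) count_pred0. Qed.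

Lemma V_S0 q n : 0 < q -> V q n.+1 0 = V q n 0.
Proof.
move=> q0; rewrite /V count_wordsS [X in _ + X]count0 ?addn0; last by move=> z; rewrite cnt1 andbF.
by apply: eq_count => z /=; rewrite qd_rcons0 // cnt0.
Qed.

Lemma V_SS q n k : 0 < q -> V q n.+1 k.+1 + Bc q n k = V q n k.+1 + V q n k.
Proof.
move=> q0; rewrite /V count_wordsS -addnA; congr (_ + _).
  by apply: eq_count => z /=; rewrite qd_rcons0 // cnt0.
rewrite /Bc -[RHS](count_split _ (bad q)) addnC; congr (_ + _); apply: eq_count => z /=.
  by case: (q_decreasing q z); case: (bad q z); case: (count id z == k).
rewrite qd_rcons1 // cnt1 eqSS.
by case: (q_decreasing q z); case: (bad q z); case: (count id z == k).
Qed.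

Lemma Ec0 q k : Ec q 0 k = (k == 0).
Proof. by rewrite /Ec /= qd_nil; case: k. Qed.

Lemma EcS0 q n : Ec q n.+1 0 = 0.
Proof.
rewrite /Ec count_wordsS !count0 // => z; first by rewrite cnt1 andbF.
by rewrite last_rcons andbF.
Qed.

Lemma EcSS q n k : 0 < q -> Ec q n.+1 k.+1 + Bc q n k = V q n k.
Proof.
move=> q0; rewrite /Ec count_wordsS [X in X + _ + _]count0 ?add0n; last first.
  by move=> z; rewrite last_rcons andbF.
rewrite /Bc /V -[RHS](count_split _ (bad q)) addnC; congr (_ + _); apply: eq_count => z /=.
  by case: (q_decreasing q z); case: (bad q z); case: (count id z == k).
rewrite qd_rcons1 // last_rcons cnt1 eqSS.
by case: (q_decreasing q z); case: (bad q z); case: (count id z == k).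
Qed.


Lemma Bc_sum q n k M : n < M -> Bc q n k = \sum_(0 <= a < M) F q a n k.
Proof.
move=> hM; rewrite /Bc /F (count_as_sum _ (words n)).
transitivity (\sum_(0 <= a < M) \sum_(z <- words n)
   ((q_decreasing q z && Bk q a z && (count id z == k)) : nat)); last first.
  by apply: eq_bigr => a _; rewrite (count_as_sum _ (words n)).
rewrite exchange_big /=; apply: eq_big_seq => z; rewrite mem_words => /eqP hz.
case: (q_decreasing q z); case: (count id z == k) => /=.
- rewrite (eq_bigr (fun a => (Bk q a z : nat))); last by move=> a _; rewrite andbT.
  by rewrite -count_as_sum /index_iota subn0 andbT count_Bk // hz.
- by rewrite andbF big1 // => a _; rewrite andbF.
- by rewrite big1.
- by rewrite big1.
Qed.

Lemma F0 q n k : F q 0 n k = 0.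
Proof. by apply: count0 => z; rewrite /Bk /= andbF. Qed.

Lemma F_small q a n k : 0 < q -> (n < size (sfx q a)) || (k < (q * a).-1) -> F q a n k = 0.
Proof.
move=> q0 h; rewrite /F -(count_pred0 (words n)); apply: eq_in_count => z.
rewrite mem_words => /eqP hz /=; apply/negbTE/negP => /andP [/andP [_ /BkP [u [E _]]] /eqP hc].
move: h hz hc; rewrite E /sfx !count_cat !count_nseq /= !size_cat !size_nseq; lia.
Qed.

Lemma F_big q a m j : 0 < q -> 0 < a ->
  F q a (m + size (sfx q a)) (j + (q * a).-1) = Ec q m j.
Proof.
move=> q0 a0; rewrite /F /Ec.
rewrite -(@count_img (fun u => u ++ sfx q a) (fun z => q_decreasing q z && last true z && (count id z == j)) m (m + size (sfx q a))); last 2 first.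
- exact: cat_injl.
- by move=> u hu; rewrite size_cat hu.
apply: eq_in_count => z; rewrite mem_words => /eqP hz /=.
apply/idP/idP.
- move=> /andP [/andP [hq /BkP [u [E [_ lu]]]] /eqP hc].
  apply/mapP; exists u => //.
  rewrite mem_filter mem_words lu.
  move: hq hc hz; rewrite E /sfx qd_block // !count_cat !count_nseq !size_cat !size_nseq /=.
  have hqa : (q * a).-1 < q * a by rewrite prednK // muln_gt0 q0.
  rewrite hqa andbT => -> hc hz /=; apply/andP; split; apply/eqP; lia.
- move=> /mapP [u]; rewrite mem_filter mem_words => /andP [/andP [/andP [hq lu] /eqP hc] hu] ->.
  rewrite /sfx qd_block // hq /=.
  have hqa : (q * a).-1 < q * a by rewrite prednK // muln_gt0 q0.
  rewrite hqa /=; apply/andP; split; first by apply/BkP; exists u.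
  by rewrite count_cat count_cat !count_nseq /= hc; apply/eqP; lia.
Qed.


Lemma size_sfx q a : size (sfx q a) = a + (q * a).-1.
Proof. by rewrite /sfx size_cat !size_nseq. Qed.

Lemma F_shift q a m j : 0 < q -> F q a.+2 (m + q.+1) (j + q) = F q a.+1 m j.
Proof.
move=> q0.
case h: ((size (sfx q a.+1) <= m) && ((q * a.+1).-1 <= j)).
- move/andP: h => [h1 h2].
  have e1 : m + q.+1 = (m - size (sfx q a.+1)) + size (sfx q a.+2).
    move: h1; rewrite !size_sfx !mulnS; lia.
  have e2 : j + q = (j - (q * a.+1).-1) + (q * a.+2).-1.
    move: h2; rewrite !mulnS; lia.
  have e3 : m = (m - size (sfx q a.+1)) + size (sfx q a.+1) by lia.
  have e4 : j = (j - (q * a.+1).-1) + (q * a.+1).-1 by lia.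
  by rewrite e1 e2 F_big // [in RHS]e3 [in RHS]e4 F_big.
- rewrite !F_small //.
    by move/negbT: h; rewrite negb_and -!ltnNge.
  by move/negbT: h; rewrite negb_and -!ltnNge !size_sfx !mulnS; lia.
Qed.

Lemma F1 q M J : 0 < q -> F q 1 (M + q) (J + q.-1) = Ec q M J.
Proof.
move=> q0; have := @F_big q 1 M J q0 erefl.
by rewrite size_sfx muln1 add1n prednK.
Qed.

Lemma Bc_formula q m j : 0 < q ->
  Bc q m j = (if (q < m) && (q <= j) then V q (m - q.+1) (j - q) else 0)
             + ((m == q) && (j == q.-1)).
Proof.
move=> q0; rewrite (@Bc_sum _ _ _ m.+3); last by lia.
rewrite big_nat_recl // big_nat_recl // F0 add0n.
case h: ((q < m) && (q <= j)).
- move/andP: h => [h1 h2].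
  have em : m = (m - q.+1) + q.+1 by lia.
  have ej : j = (j - q) + q by lia.
  set m' := m - q.+1 in em *; set j' := j - q in ej *.
  have -> : (m == q) && (j == q.-1) = false by apply/negbTE; rewrite negb_and; apply/orP; left; apply/eqP; lia.
  rewrite addn0 -(EcSS _ _ q0) (@Bc_sum _ m' _ m.+2); last by lia.
  rewrite [in RHS]big_nat_recl // F0 add0n.
  congr (_ + _).
    rewrite em ej.
    have -> : m' + q.+1 = m'.+1 + q by lia.
    have -> : j' + q = j'.+1 + q.-1 by lia.
    by rewrite F1.
  by apply: eq_bigr => i _; rewrite {1}em {1}ej F_shift.
- rewrite big1 ?addn0; last first.
    move=> i _; apply: F_small => //.
    by move/negbT: h; rewrite negb_and -!leqNgt !size_sfx !mulnS; lia.
  case h2: ((q <= m) && (q.-1 <= j)).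
  + move/andP: h2 => [h1 h2].
    have em : m = (m - q) + q by lia.
    have ej : j = (j - q.-1) + q.-1 by lia.
    rewrite em ej F1 //.
    move/negbT: h; rewrite negb_and -leqNgt -ltnNge => h.
    case e: (m - q) => [|M].
    * rewrite Ec0 add0n eqxx /=.
      have -> : (j - q.-1 + q.-1 == q.-1) = (j - q.-1 == 0) by apply/idP/idP => /eqP ?; apply/eqP; lia.
      done.
    * have -> : j - q.-1 = 0 by case/orP: h => h; lia.
      rewrite EcS0; apply/eqP; rewrite eq_sym eqb0; apply/negP => /andP [/eqP ? _]; lia.
  + rewrite F_small //; last first.
      by move/negbT: h2; rewrite negb_and -!ltnNge size_sfx muln1 add1n prednK.
    apply/eqP; rewrite eq_sym eqb0; apply/negP => /andP [/eqP e1 /eqP e2].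
    by move/negbT: h2; rewrite e1 e2 !leqnn.
Qed.


Lemma wcount q n k : w_count q n k = V q n k.
Proof.
rewrite /w_count /V cardsE cardE /enum_mem size_filter -enumT.
set P := fun z : seq bool => _.
rewrite (@eq_count _ _ (preim val P)) //.
rewrite -count_map; apply/permP; apply: uniq_perm.
- by rewrite (map_inj_uniq val_inj) enum_uniq.
- exact: words_uniq.
move=> z; rewrite mem_words; apply/mapP/eqP => [[t _ ->]|hz]; first by rewrite size_tuple.
by exists (Tuple (introT eqP hz)); rewrite ?mem_enum.
Qed.

Import GRing.Theory.

Lemma smul_addl f1 f2 g n k : smul (sadd f1 f2) g n k = (smul f1 g n k + smul f2 g n k)%R.
Proof.
rewrite /smul /sadd -big_split; apply: eq_bigr => i _ /=.
rewrite -big_split; apply: eq_bigr => j _ /=; by rewrite mulrDl.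
Qed.

Lemma sum1 k b (h : nat -> int) :
  (\sum_(j < k.+1) (if (j == b :> nat) then h j else 0) = if (b <= k)%N then h b else 0)%R.
Proof.
case: (leqP b k) => hb.
- have hb' : b < k.+1 by lia.
  rewrite (bigD1 (Ordinal hb')) //= eqxx big1 ?addr0 // => j /eqP hj.
  case: eqP => // e; exfalso; apply: hj; apply: val_inj => /=; exact: e.
- rewrite big1 // => j _; case: eqP => // e; have := ltn_ord j; lia.
Qed.

Lemma smul_mono c a b g n k : smul (smono c a b) g n k =
  if (a <= n) && (b <= k) then (c * g (n - a)%N (k - b)%N)%R else 0%R.
Proof.
rewrite /smul /smono.
transitivity (\sum_(i < n.+1) if (i == a :> nat) then
     (\sum_(j < k.+1) if (j == b :> nat) then c * g (n - i)%N (k - j)%N else 0) else 0)%R.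
  apply: eq_bigr => i _; case: eqP => _ /=; last by rewrite big1 // => j _; rewrite mul0r.
  by apply: eq_bigr => j _; case: eqP => _ /=; rewrite ?mul0r.
rewrite (sum1 _ _ (fun i => \sum_(j < k.+1) (if (j == b :> nat) then c * g (n - i)%N (k - j)%N else 0))%R).
case: (a <= n)%N => //=.
by rewrite (sum1 _ _ (fun j => c * g (n - a)%N (k - j)%N)%R).
Qed.


Lemma V0 q k : V q 0 k = (k == 0).
Proof. by rewrite /V /= qd_nil; case: k. Qed.

Theorem theorem2 (q : nat) (hq : 1 <= q) :
  forall n k : nat, smul (Wden q) (W q) n k = Wnum q n k.
Proof.
move=> n k; rewrite /Wden !smul_addl !smul_mono /Wnum /sadd /smono /W !wcount.
case: n => [|m].
  rewrite V0 /=. case: k => [|k] //=.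
rewrite !subn0 !subSS !subn0 /=.
case: k => [|k].
  have -> : (0%N == q) = false by apply/eqP; lia.
  rewrite /= V_S0 // ltn0 !andbF; lia.
rewrite subn1 /= subSS !ltnS eqSS.
have -> : (k.+1 == q) = (k == q.-1) by apply/eqP/eqP; lia.
have h1 := V_SS m k hq; have h2 := Bc_formula m k hq.
case: ((q < m) && (q <= k)) h2 => h2; case: ((m == q) && (k == q.-1)) h2 => h2 /=; lia.
Qed.
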